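(* For each integer $k\ge 2$, a $k$-regular friendship digraph exists if and only if there exists a $(k^2-k+1,k,1)$-SBIBD.
   Context: All digraphs are finite and have neither loops nor parallel arcs (a pair of opposite arcs $(u,v)$ and $(v,u)$ is allowed). A friendship digraph is a nontrivial digraph (at least two vertices) in which any two distinct vertices have exactly one common out-neighbor. A $k$-regular digraph is one in which every vertex has outdegree $k$ and indegree $k$. A $(v,k,\lambda)$-SBIBD (symmetric balanced incomplete block design) is a set $V$ of $v$ varieties (points) together with a collection of $v$ blocks, each a $k$-element subset of $V$, such that each variety lies in exactly $k$ blocks and each pair of distinct varieties lies in exactly $\lambda$ blocks. *)

(* Defs.v *)
From mathcomp Require Import all_boot.
Set Implicit Arguments. Unset Strict Implicit. Unset Printing Implicit Defensive.

(* A finite digraph on vertex set T is an arc relation adj : rel T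
   (adj u v = arc u -> v). Using a relation excludes parallel arcs;
   loops are excluded by irreflexivity. Opposite arcs are allowed. *)
Definition loopless (T : finType) (adj : rel T) : Prop :=
  forall u : T, ~~ adj u u.

Definition out_nbhd (T : finType) (adj : rel T) (u : T) : {set T} :=
  [set w | adj u w].
Definition in_nbhd (T : finType) (adj : rel T) (u : T) : {set T} :=
  [set w | adj w u].

Definition friendship_digraph (T : finType) (adj : rel T) : Prop :=
  loopless adj /\ 2 <= #|T| /\
  forall u v : T, u != v -> #|out_nbhd adj u :&: out_nbhd adj v| = 1.

Definition k_regular (T : finType) (adj : rel T) (k : nat) : Prop :=
  forall u : T, #|out_nbhd adj u| = k /\ #|in_nbhd adj u| = k.

(* (v,k,lambda)-SBIBD: varieties V, a collection of v blocks indexed by I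
   (repetitions allowed), each block a k-subset, each variety in k blocks,
   each pair of distinct varieties in lambda blocks. *)
Definition is_SBIBD (V I : finType) (B : I -> {set V}) (v k lam : nat) : Prop :=
  [/\ #|V| = v, #|I| = v,
      (forall i : I, #|B i| = k),
      (forall x : V, #|[set i | x \in B i]| = k) &
      (forall x y : V, x != y -> #|[set i | (x \in B i) && (y \in B i)]| = lam)].

(* Main.v *)
Require Import Defs.
From mathcomp Require Import all_boot zify.
Set Implicit Arguments. Unset Strict Implicit. Unset Printing Implicit Defensive.

Lemma sum_bool_card (T : finType) (P : pred T) :
  \sum_(x : T) (P x : nat) = #|[set x | P x]|.
Proof.
apply/esym; rewrite -sum1_card big_mkcond /=; apply: eq_bigr => x _; rewrite inE; by case: (P x).
Qed.

Lemma count_n (T : finType) (adj : rel T) k :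
  friendship_digraph adj -> k_regular adj k -> #|T| = k ^ 2 - k + 1.
Proof.
move=> [_ [hT hf]] hk.
have indeg : forall u, \sum_(x : T) (adj x u : nat) = k.
  move=> u; rewrite sum_bool_card; have [_ <-] := hk u; by [].
have pair : forall x y, x != y -> \sum_(u : T) (adj x u : nat) * (adj y u) = 1.
  move=> x y xy; rewrite -(hf x y xy).
  rewrite (eq_bigr (fun u => ((adj x u && adj y u) : nat))); last by move=> u _; rewrite mulnb.
  rewrite sum_bool_card; apply: eq_card => u; by rewrite !inE.
have L : \sum_(x : T) \sum_(y | y != x) \sum_(u : T) (adj x u : nat) * (adj y u)
         = #|T| * #|T|.-1.
  rewrite (eq_bigr (fun _ => #|T|.-1)) ?sum_nat_const //.
  move=> x _; rewrite (eq_bigr (fun _ => 1)); last by move=> y yx; apply: pair; rewrite eq_sym.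
  by rewrite sum1_card cardC1.
have R : \sum_(x : T) \sum_(y | y != x) \sum_(u : T) (adj x u : nat) * (adj y u)
         = #|T| * (k * (k - 1)).
  rewrite (eq_bigr (fun x => \sum_(u : T) \sum_(y | y != x) (adj x u : nat) * (adj y u)));
    last by move=> x _; rewrite exchange_big.
  rewrite exchange_big /=.
  rewrite (eq_bigr (fun _ => k * (k - 1))) ?sum_nat_const //.
  move=> u _.
  rewrite (eq_bigr (fun x => (adj x u : nat) * (k - 1))).
    by rewrite -big_distrl /= indeg.
  move=> x _; rewrite -big_distrr /=.
  have := indeg u; rewrite (bigD1 x) //=.
  case: (adj x u) => /=; lia.
have := L; rewrite R => /eqP; rewrite eqn_pmul2l; last by lia.
move/eqP => e; rewrite (expnS k 1) expn1 mulnBr muln1 in e *. nia.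
Qed.

Section Hall.
Variables (X Y : finType) (y0 : Y).
Definition NS (E : X -> Y -> bool) (S : {set X}) : {set Y} :=
  [set y | [exists x in S, E x y]].

Lemma NS_mem (E : X -> Y -> bool) (S : {set X}) x y : x \in S -> E x y -> y \in NS E S.
Proof. by move=> xS Exy; rewrite inE; apply/existsP; exists x; rewrite xS. Qed.

Lemma hall n : forall (E : X -> Y -> bool) (A : {set X}), #|A| <= n ->
  (forall S : {set X}, S \subset A -> #|S| <= #|NS E S|) ->
  exists f : X -> Y, {in A &, injective f} /\ {in A, forall x, E x (f x)}.
Proof.
elim: n => [|n IH] E A hA hH.
  exists (fun _ => y0); move: hA; rewrite leqn0 cards_eq0 => /eqP ->.
  by split=> x; rewrite in_set0.
case: (set_0Vmem A) => [->|[a aA]].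
  by exists (fun _ => y0); split=> x; rewrite in_set0.
case: (boolP [exists S : {set X}, [&& S != set0, S \proper A & #|NS E S| <= #|S|]]).
- case/existsP => S /and3P [Sn0 SA tight].
  have SsA := proper_sub SA.
  have hS : #|S| <= n by have := proper_card SA; lia.
  have [f1 [f1i f1E]] := IH E S hS (fun T TS => hH T (subset_trans TS SsA)).
  pose E2 := fun x y => E x y && (y \notin NS E S).
  have hA2 : #|A :\: S| <= n.
    have := cardsID S A; rewrite (setIidPr SsA).
    move: Sn0; rewrite -card_gt0; lia.
  have hH2 : forall T : {set X}, T \subset A :\: S -> #|T| <= #|NS E2 T|.
    move=> T TAS.
    have TA : T \subset A by apply: subset_trans TAS (subsetDl _ _).
    have TSd : T :&: S = set0.
      apply/setP=> x; rewrite !inE; apply/negbTE/andP => -[xT xS].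
      by have := subsetP TAS x xT; rewrite !inE xS.
    have e1 : NS E T :\: NS E S \subset NS E2 T.
      apply/subsetP => y; rewrite inE => /andP [yS].
      rewrite inE => /existsP [x /andP [xT Exy]].
      by apply: (NS_mem xT); rewrite /E2 Exy yS.
    have e2 : NS E (T :|: S) \subset NS E T :|: NS E S.
      apply/subsetP => y; rewrite inE => /existsP [x /andP [xTS Exy]].
      rewrite inE; case/setUP: xTS => xX.
        by rewrite (NS_mem xX Exy).
      by rewrite (NS_mem xX Exy) orbT.
    have hTS : #|T :|: S| <= #|NS E (T :|: S)| by apply: hH; rewrite subUset TA SsA.
    have c1 := cardsU T S; rewrite TSd cards0 in c1.
    have c2 := subset_leq_card e2.
    have c3 := subset_leq_card e1.
    have c4 := cardsID (NS E S) (NS E T :|: NS E S).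
    have c5 : (NS E T :|: NS E S) :&: NS E S = NS E S by apply/setIidPr; apply: subsetUr.
    have c6 : (NS E T :|: NS E S) :\: NS E S = NS E T :\: NS E S.
      by apply/setP => y; rewrite !inE; case: [exists x in S, E x y]; rewrite /= ?orbT ?orbF.
    rewrite c5 c6 in c4.
    lia.
  have [f2 [f2i f2E]] := IH E2 (A :\: S) hA2 hH2.
  exists (fun x => if x \in S then f1 x else f2 x); split.
  + move=> x y xA yA /=.
    have f2N : forall z, z \in A -> z \notin S -> f2 z \notin NS E S.
      move=> z zA zS; have h : z \in A :\: S by rewrite inE zS zA.
      by case/andP: (f2E z h).
    case: ifP => xS; case: ifP => yS.
    * exact: f1i.
    * by move=> e; have := f2N y yA (negbT yS); rewrite -e (NS_mem xS (f1E x xS)).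
    * by move=> e; have := f2N x xA (negbT xS); rewrite e (NS_mem yS (f1E y yS)).
    * by apply: f2i; rewrite !inE ?xS ?yS ?xA ?yA.
  + move=> x xA /=; case: ifP => xS; first exact: f1E.
    have h : x \in A :\: S by rewrite inE xS xA.
    by case/andP: (f2E x h).
- rewrite negb_exists => /forallP hno.
  have : 0 < #|NS E [set a]|.
    by have := hH [set a]; rewrite sub1set aA cards1 => /(_ isT).
  rewrite card_gt0 => /set0Pn [b]; rewrite inE => /existsP [x /andP [xa Eab]].
  move: xa; rewrite inE => /eqP ?; subst x.
  pose E2 := fun x y => E x y && (y != b).
  have hA2 : #|A :\ a| <= n by have := cardsD1 a A; rewrite aA; lia.
  have hH2 : forall T : {set X}, T \subset A :\ a -> #|T| <= #|NS E2 T|.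
    move=> T TA.
    case: (set_0Vmem T) => [->|[t tT]]; first by rewrite cards0.
    have TA' : T \subset A by apply: subset_trans TA (subsetDl _ _).
    have aT : a \notin T by apply/negP => aT; have := subsetP TA a aT; rewrite !inE eqxx.
    have pT : T \proper A.
      rewrite properE TA' /=; apply/negP => /subsetP h.
      by have := h a aA; rewrite (negbTE aT).
    have Tn0 : (T != set0) by apply/set0Pn; exists t.
    have := hno T; rewrite pT Tn0 /= -ltnNge => lt.
    have e1 : NS E T :\ b \subset NS E2 T.
      apply/subsetP => y; rewrite in_setD1 => /andP [yb]; rewrite inE => /existsP [x /andP [xT Exy]].
      by apply: (NS_mem xT); rewrite /E2 Exy yb.
    have := subset_leq_card e1; have := cardsD1 b (NS E T).
    case: (b \in NS E T) => /=; lia.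
  have [f2 [f2i f2E]] := IH E2 (A :\ a) hA2 hH2.
  exists (fun x => if x == a then b else f2 x); split.
  + have f2N : forall z, z \in A -> z != a -> f2 z != b.
      move=> z zA za; have h : z \in A :\ a by rewrite !inE za zA.
      by case/andP: (f2E z h).
    move=> x y xA yA /=.
    case: eqP => xa; case: eqP => ya.
    * by rewrite xa ya.
    * by move=> e; have := f2N y yA (introN eqP ya); rewrite -e eqxx.
    * by move=> e; have := f2N x xA (introN eqP xa); rewrite e eqxx.
    * apply: f2i; rewrite in_setD1 ?xA ?yA andbT; exact/eqP.
  + move=> x xA /=; case: eqP => [->|xa]; first exact: Eab.
    have h : x \in A :\ a by rewrite in_setD1 xA andbT; apply/eqP.
    by case/andP: (f2E x h).
Qed.
End Hall.

Lemma card_pre (V I : finType) (f : V -> I) : injective f -> #|V| = #|I| ->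
  forall P : pred I, #|[set u | P (f u)]| = #|[set i | P i]|.
Proof.
move=> finj hc P.
have surj : forall i, exists u, i = f u.
  have e : f @: setT = setT.
    apply/eqP; rewrite eqEcard subsetT /= card_imset // !cardsT hc //.
  move=> i; have : i \in f @: setT by rewrite e inE.
  by case/imsetP => u _ ->; exists u.
rewrite -(card_imset _ finj); apply: eq_card => i; rewrite inE.
apply/imsetP/idP.
  by case=> u; rewrite inE => Pu ->.
by move=> Pi; have [u eu] := surj i; exists u; rewrite // inE -eu.
Qed.

Theorem theorem1p2 (k : nat) (hk : 2 <= k) :
  (exists (T : finType) (adj : rel T), friendship_digraph adj /\ k_regular adj k)
  <->
  (exists (V I : finType) (B : I -> {set V}), is_SBIBD B (k ^ 2 - k + 1) k 1).
Proof.
have ek : k ^ 2 = k * k by rewrite (expnS k 1) expn1.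
split.
- move=> [T [adj [fr reg]]].
  exists T, T, (fun u => in_nbhd adj u); split.
  + exact: count_n fr reg.
  + exact: count_n fr reg.
  + by move=> i; have [_ ->] := reg i.
  + move=> x; have [<- _] := reg x; apply: eq_card => i; by rewrite !inE.
  + move=> x y xy; have [_ [_ h]] := fr; rewrite -(h x y xy).
    apply: eq_card => i; by rewrite !inE.
- move=> [V [I [B [hV hI hB hx hxy]]]].
  have /card_gt0P [i0 _] : 0 < #|I| by rewrite hI; lia.
  pose E := fun x i => x \notin B i.
  pose d := (k ^ 2 - k + 1) - k.
  have dpos : 0 < d by rewrite /d ek; nia.
  have degX : forall x, \sum_(i : I) (E x i : nat) = d.
    move=> x; rewrite sum_bool_card.
    have := cardsC [set i | x \in B i]; rewrite hx hI.
    have -> : #|~: [set i | x \in B i]| = #|[set i | E x i]|.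
      by apply: eq_card => i; rewrite !inE.
    rewrite /d; lia.
  have degY : forall i, \sum_(x : V) (E x i : nat) = d.
    move=> i; rewrite sum_bool_card.
    have := cardsC (B i); rewrite hB hV.
    have -> : #|~: B i| = #|[set x | E x i]|.
      by apply: eq_card => x; rewrite !inE.
    rewrite /d; lia.
  have hall_c : forall S : {set V}, S \subset setT -> #|S| <= #|NS E S|.
    move=> S _.
    have h1 : \sum_(x in S) \sum_(i : I) (E x i : nat) = #|S| * d.
      by rewrite (eq_bigr (fun _ => d)) ?sum_nat_const // => x _; exact: degX.
    have h2 : \sum_(i : I) \sum_(x in S) (E x i : nat) <= \sum_(i : I) ((i \in NS E S) : nat) * d.
      apply: leq_sum => i _; case: (boolP (i \in NS E S)) => hi /=.
        rewrite mul1n -(degY i) big_mkcond /=; apply: leq_sum => x _; by case: ifP.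
      rewrite mul0n leqn0; apply/eqP; apply: big1 => x xS.
      case: (boolP (E x i)) => // Exi; by rewrite (NS_mem xS Exi) in hi.
    have h3 : \sum_(i : I) ((i \in NS E S) : nat) * d = #|NS E S| * d.
      rewrite -big_distrl /= (sum_bool_card (fun i => i \in NS E S)); congr (_ * _).
      by apply: eq_card => i; rewrite inE.
    rewrite exchange_big /= in h1.
    by rewrite -(leq_pmul2r dpos) -h1 -h3.
  have [f [finj' fE]] := hall i0 (leqnn #|[set: V]|) hall_c.
  have finj : injective f by move=> x y; apply: finj'; rewrite inE.
  have fE' : forall x, x \notin B (f x) by move=> x; apply: (fE x); rewrite inE.
  have cp := card_pre finj (etrans hV (esym hI)).
  exists V, (fun w u => w \in B (f u)); split; [split; [|split]|].
  + by move=> u; exact: fE'.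
  + rewrite hV; nia.
  + move=> x y xy; rewrite -(hxy x y xy) -(cp (fun i => (x \in B i) && (y \in B i))).
    by apply: eq_card => u; rewrite !inE.
  + move=> u; split.
      rewrite -(hx u) -(cp (fun i => u \in B i)).
      by apply: eq_card => w; rewrite !inE.
    rewrite -(hB (f u)); by apply: eq_card => w; rewrite !inE.
Qed.
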